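(* For $R\in\mathbb{R}_+$, let $p,p'\in\mathbb{R}^2$ satisfy $\|p-p'\|\le R$. Then the area $A$ of $B_R(p')\cap B_R^c(p)$ satisfies $A\le\frac{2\sqrt3+3}{3}R\,\|p-p'\|$.
   Context: $B_R(p)$ is the closed Euclidean ball in $\mathbb{R}^2$ of radius $R$ centered at $p$, and $B_R^c(p)$ its complement; area means Lebesgue measure. *)

(* Defs.v *)
From mathcomp Require Import all_boot all_order all_algebra.
From mathcomp Require Import all_classical all_reals all_analysis.
Set Implicit Arguments. Unset Strict Implicit. Unset Printing Implicit Defensive.
Import Order.TTheory GRing.Theory Num.Theory.
Local Open Scope classical_set_scope.
Local Open Scope ring_scope.

Definition euclid_dist {R : realType} (p q : R * R) : R :=
  Num.sqrt ((p.1 - q.1) ^+ 2 + (p.2 - q.2) ^+ 2).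

Definition cball2 {R : realType} (p : R * R) (r : R) : set (R * R) :=
  [set q | euclid_dist p q <= r].

Definition area {R : realType} : set (R * R) -> \bar R :=
  ((@lebesgue_measure R) \x (@lebesgue_measure R))%E.

(* Main.v *)
Require Import Defs.
From mathcomp Require Import all_boot all_order all_algebra.
From mathcomp Require Import all_classical all_reals all_analysis.
From mathcomp Require Import ring lra measurable_realfun.
Import Order.TTheory GRing.Theory Num.Theory.
Local Open Scope classical_set_scope.
Local Open Scope ring_scope.

Section S.
Variable R : realType.

Lemma eqle (x y : R) : x = y -> x <= y.
Proof. by move->. Qed.

Lemma leb_shift (t : R) (A : set R) : measurable A ->
  @lebesgue_measure R [set x : R | A (x + t)] = lebesgue_measure A.
Proof.
move=> mA.
have mf : measurable_fun [set: measurableTypeR R] (fun x : R => x + t).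
  by apply: measurable_funD => //; exact: measurable_cst.
have -> : lebesgue_measure [set x : R | A (x + t)] = pushforward lebesgue_measure ((fun x => x + t) : _ -> measurableTypeR R) A by [].
apply/esym; apply: (@lebesgue_measure_unique R (pushforward lebesgue_measure ((fun x => x + t) : _ -> measurableTypeR R))) => //.
move=> X [[a b] _ <-] /=.
rewrite /pushforward.
have -> : (fun x : R => x + t) @^-1` `]a, b]%classic = `]a - t, b - t]%classic.
  by apply/seteqP; split => x /=; rewrite !in_itv /= => /andP[h1 h2]; apply/andP; split; lra.
rewrite !lebesgue_measure_itv /= !lte_fin.
have -> : (a - t < b - t) = (a < b) by rewrite ltrD2r.
case: ifP => // _; congr (_%:E); lra.
Qed.

Lemma quad_convex (A B C u z w M : R) : 0 <= A -> u <= z -> z <= w ->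
  A*u^+2 + B*u + C <= M -> A*w^+2 + B*w + C <= M -> A*z^+2 + B*z + C <= M.
Proof.
move=> A0 uz zw hu hw.
have e : (w - u) * (A*z^+2 + B*z + C - M) =
  (w - z) * (A*u^+2 + B*u + C - M) + (z - u) * (A*w^+2 + B*w + C - M)
  - A * ((w - u) * (z - u) * (w - z)) by ring.
have h1 : 0 <= (w - u) * (z - u) * (w - z) by apply: mulr_ge0; [apply: mulr_ge0|]; lra.
have h2 : 0 <= A * ((w - u) * (z - u) * (w - z)) by apply: mulr_ge0.
have h3 : (w - z) * (A*u^+2 + B*u + C - M) <= 0 by apply: mulr_ge0_le0; lra.
have h4 : (z - u) * (A*w^+2 + B*w + C - M) <= 0 by apply: mulr_ge0_le0; lra.
have [uw|uw] := eqVneq u w.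
  have -> : z = u by lra.
  done.
have wu : 0 < w - u by move: uw; rewrite neq_lt => /orP[]; lra.
rewrite -subr_le0.
have : (w - u) * (A*z^+2 + B*z + C - M) <= 0 by lra.
by rewrite pmulr_rle0.
Qed.

Lemma diam_measure (E : set R) (c : R) : measurable E -> 0 <= c ->
  (forall x y, E x -> E y -> y - x <= c) -> (lebesgue_measure E <= c%:E)%E.
Proof.
move=> mE c0 hE.
have [->|/set0P[e Ee]] := eqVneq E set0.
  by rewrite measure0 lee_fin.
have lbE : has_lbound E.
  exists (e - c) => y Ey; have := hE y e Ey Ee; lra.
have sub : E `<=` `[inf E, inf E + c]%classic.
  move=> x Ex /=; rewrite in_itv /=; apply/andP; split.
    exact: (ge_inf lbE).
  have : x - c <= inf E.
    apply: lb_le_inf; first by exists e.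
    move=> y Ey; have := hE y x Ey Ex; lra.
  lra.
apply: (@le_trans _ _ (lebesgue_measure `[inf E, inf E + c]%classic)).
  apply: le_measure => //; rewrite inE //; exact: measurable_itv.
rewrite lebesgue_measure_itv /= lte_fin.
case: ifP => _; rewrite lee_fin //; lra.
Qed.

Lemma int_bound (f : R -> \bar R) (c t0 L : R) : measurable_fun setT f ->
  (forall t, 0 <= f t)%E -> (forall t, f t <= c%:E)%E ->
  (forall t, L^+2 < (t - t0)^+2 -> f t = 0%E) -> 0 <= c -> 0 <= L ->
  (\int[lebesgue_measure]_t f t <= (c * (2 * L))%:E)%E.
Proof.
move=> mf f0 fc fL c0 L0.
pose I := `[t0 - L, t0 + L]%classic.
have mI : measurable I by exact: measurable_itv.
apply: (@le_trans _ _ (\int[lebesgue_measure]_t (c * \1_I t)%:E)%E).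
  apply: ge0_le_integral => //.
  - apply/measurable_EFinP; apply: measurable_funM => //.
    - move=> t _; rewrite indicE; have [tI|tI] := boolP (t \in I).
      by rewrite mulr1.
    rewrite mulr0 fL //.
    move: tI; rewrite notin_setE /I /= in_itv /= => /negP; rewrite negb_and -!ltNge => /orP[] h; nra.
under eq_integral do rewrite EFinM.
have mi : measurable_fun setT (fun t => (\1_I t)%:E : \bar R).
  by apply/measurable_EFinP; exact: measurable_indic.
rewrite (@ge0_integralZl _ _ _ lebesgue_measure setT measurableT _ mi c%:E); last 2 first.
  - by move=> t _; rewrite lee_fin.
  - by rewrite lee_fin.
rewrite integral_indic // setIT.
have hI : lebesgue_measure I = ((t0 + L) - (t0 - L))%:E.
  rewrite /I lebesgue_measure_itv /= lte_fin.
  have [h|h] := boolP (t0 - L < t0 + L); first by [].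
  congr (_%:E); have : t0 - L >= t0 + L by rewrite leNgt.
  lra.
have -> : (c%:E * lebesgue_measure I)%E = (c%:E * ((t0 + L) - (t0 - L))%R%:E)%E.
  by rewrite hI.
rewrite -EFinM lee_fin; apply: ler_wpM2l => //; lra.
Qed.

Lemma diam_geom (A0 B0 C0 a y1 y2 M : R) : 0 <= A0 ->
  A0*(y1 - a)^+2 + B0*(y1 - a) + C0 <= M -> ~ (A0*y1^+2 + B0*y1 + C0 <= M) ->
  A0*(y2 - a)^+2 + B0*(y2 - a) + C0 <= M -> ~ (A0*y2^+2 + B0*y2 + C0 <= M) ->
  y2 - y1 <= `|a|.
Proof.
move=> A0p h1 n1 h2 n2.
rewrite leNgt; apply/negP => hlt.
have [a0|a0] := leP 0 a.
  move: hlt; rewrite ger0_norm // => hlt.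
  apply: n1; apply: (@quad_convex A0 B0 C0 (y1 - a) y1 (y2 - a) M A0p _ _ h1 h2); lra.
move: hlt; rewrite ltr0_norm // => hlt.
apply: n2; apply: (@quad_convex A0 B0 C0 (y1 - a) y2 (y2 - a) M A0p _ _ h1 h2); lra.
Qed.

Lemma area_swap (X : set (R * R)) : measurable X ->
  area X = (lebesgue_measure \x^ lebesgue_measure)%E X.
Proof.
move=> mX; apply: product_measure_unique => // A B mA mB.
exact: product_measure2E.
Qed.

Lemma mQ (c : R * R) : measurable_fun setT (fun z : R * R => (c.1 - z.1)^+2 + (c.2 - z.2)^+2).
Proof.
by apply: measurable_funD; apply: measurable_funX; apply: measurable_funB.
Qed.

Lemma mball (c : R * R) (s : R) :
  measurable [set z : R * R | (c.1 - z.1)^+2 + (c.2 - z.2)^+2 <= s].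
Proof.
have := mQ c measurableT _ (measurable_itv `]-oo, s]).
rewrite setTI; congr measurable.
Qed.

Lemma cballE (c : R * R) (r : R) (z : R * R) : 0 < r ->
  cball2 c r z <-> (c.1 - z.1)^+2 + (c.2 - z.2)^+2 <= r^+2.
Proof.
move=> r0; rewrite /cball2 /euclid_dist /=.
set X := _ + _.
have X0 : 0 <= X by rewrite /X addr_ge0 // sqr_ge0.
have sX := sqr_sqrtr X0.
have s0 : 0 <= Num.sqrt X := sqrtr_ge0 X.
split => h; first nra.
have : Num.sqrt X <= Num.sqrt (r^+2) by apply: ler_wsqrtr.
by rewrite sqrtr_sqr ger0_norm // ltW.
Qed.


Lemma area_bound1 (B : set (R * R)) (c t0 L : R) : measurable B -> 0 <= c -> 0 <= L ->
  (forall x y1 y2, B (x, y1) -> B (x, y2) -> y2 - y1 <= c) ->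
  (forall x y, L^+2 < (x - t0)^+2 -> ~ B (x, y)) ->
  (area B <= (c * (2 * L))%:E)%E.
Proof.
move=> mB c0 L0 hd hs.
rewrite /area /product_measure1.
apply: int_bound => //.
- exact: measurable_fun_xsection.
- move=> x; apply: diam_measure => //; first exact: measurable_xsection.
  by move=> y1 y2; rewrite /xsection /= !inE; exact: hd.
- move=> x hx.
  have E0 : xsection B x = set0.
    by apply/seteqP; split => // y; rewrite /xsection /= inE => /(hs _ _ hx).
  by rewrite /= E0 measure0.
Qed.

Lemma area_bound2 (B : set (R * R)) (c t0 L : R) : measurable B -> 0 <= c -> 0 <= L ->
  (forall y x1 x2, B (x1, y) -> B (x2, y) -> x2 - x1 <= c) ->
  (forall x y, L^+2 < (y - t0)^+2 -> ~ B (x, y)) ->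
  (area B <= (c * (2 * L))%:E)%E.
Proof.
move=> mB c0 L0 hd hs.
rewrite area_swap // /product_measure2.
apply: int_bound => //.
- exact: measurable_fun_ysection.

- move=> y; apply: diam_measure => //; first exact: measurable_ysection.
  by move=> x1 x2; rewrite /ysection /= !inE; exact: hd.
- move=> y hy.
  have E0 : ysection B y = set0.
    by apply/seteqP; split => // x; rewrite /ysection /= inE => /(hs _ _ hy).
  by rewrite /= E0 measure0.
Qed.

Lemma area_shear (A : set (R * R)) (k : R) : measurable A ->
  area [set z : R * R | A (z.1, z.2 + k * z.1)] = area A.
Proof.
move=> mA.
rewrite /area /product_measure1; apply: eq_integral => x _ /=.
rewrite -(leb_shift (k * x) _ (measurable_xsection x mA)).
by congr (lebesgue_measure _).
Qed.

Lemma shear_meas (A : set (R * R)) (k : R) : measurable A ->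
  measurable [set z : R * R | A (z.1, z.2 + k * z.1)].
Proof.
move=> mA.
pose h := fun z : R * R => (z.1, z.2 + k * z.1).
have mh : measurable_fun setT h.
  apply: measurable_fun_pair => //.
  by apply: measurable_funD => //; apply: measurable_funM => //; exact: measurable_cst.
by have := mh measurableT _ mA; rewrite setTI.
Qed.

End S.

Theorem lemmaB1 (R : realType) (r : R) (p p' : R * R) :
  0 < r -> euclid_dist p p' <= r ->
  (area (cball2 p' r `&` ~` cball2 p r) <=
   (((2 * Num.sqrt 3 + 3) / 3) * r * euclid_dist p p')%:E)%E.
Proof.
move=> r0 _.
case: p => p1 p2; case: p' => q1 q2.
set A := cball2 (q1, q2) r `&` ~` cball2 (p1, p2) r.
have memA : forall z, A z <-> (((q1 - z.1)^+2 + (q2 - z.2)^+2 <= r^+2) /\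
    ~ ((p1 - z.1)^+2 + (p2 - z.2)^+2 <= r^+2)).
  move=> z; rewrite /A /=; split => [[h1 h2]|[h1 h2]]; split.
  - exact: (iffLR (cballE _ (q1, q2) r z r0) h1).
  - by move=> h; apply: h2; apply: (iffRL (cballE _ (p1, p2) r z r0)).
  - exact: (iffRL (cballE _ (q1, q2) r z r0) h1).
  - by move=> h; apply: h2; apply: (iffLR (cballE _ (p1, p2) r z r0)).
have mA : measurable A.
  have -> : A = [set z : R * R | ((q1, q2).1 - z.1)^+2 + ((q1, q2).2 - z.2)^+2 <= r^+2]
      `&` ~` [set z : R * R | ((p1, p2).1 - z.1)^+2 + ((p1, p2).2 - z.2)^+2 <= r^+2].
    by apply/seteqP; split => z /memA.
  apply: measurableI; first exact: mball.
  by apply: measurableC; exact: mball.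
set d := euclid_dist _ _.
have d0 : 0 <= d by exact: sqrtr_ge0.
have hC : (2 : R) <= (2 * Num.sqrt 3 + 3) / 3.
  have s0 : 0 <= Num.sqrt (3 : R) := sqrtr_ge0 _.
  have s3 : Num.sqrt (3 : R) ^+ 2 = 3 by rewrite sqr_sqrtr.
  have : 3 / 2 <= Num.sqrt (3 : R) by nra.
  lra.
suff H : (area A <= (2 * r * d)%:E)%E.
  apply: (le_trans H); rewrite lee_fin.
  have rd : 0 <= r * d by apply: mulr_ge0 => //; exact: ltW.
  by rewrite -mulrA -[X in _ <= X]mulrA; apply: ler_wpM2r.
have [a0|a0] := eqVneq q1 p1.
  subst q1.
  apply: (le_trans (@area_bound1 R A `|q2 - p2| p1 r mA _ _ _ _)).
  - exact: normr_ge0.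
  - exact: ltW.
  - move=> x y1 y2 /memA [h1 n1] /memA [h2 n2].
    apply: (@diam_geom R 1 (-2 * p2) (p2^+2 + (p1 - x)^+2) (q2 - p2) y1 y2 (r^+2)) => //.
    + by apply: le_trans h1; apply: eqle => /=; ring.
    + by move=> hh; apply: n1 => /=; apply: le_trans hh; apply: eqle; ring.
    + by apply: le_trans h2; apply: eqle => /=; ring.
    + by move=> hh; apply: n2 => /=; apply: le_trans hh; apply: eqle; ring.
  - move=> x y hx /memA [h1 _].
    move: h1 => /= h1; have := sqr_ge0 (q2 - y); nra.
  rewrite lee_fin.
  have -> : d = `|q2 - p2|.
    rewrite /d /euclid_dist /= subrr expr0n /= add0r -sqrtr_sqr.
    congr Num.sqrt; ring.
  have := normr_ge0 (q2 - p2); nra.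
have [a ha] : exists a, q1 = p1 + a by exists (q1 - p1); ring.
subst q1.
have an0 : a != 0 by apply: contra_neq a0 => ->; rewrite addr0.
have [k hk] : exists k, q2 = p2 + k * a.
  by exists ((q2 - p2) / a); rewrite divfK // addrC subrK.
subst q2.
rewrite -(@area_shear R A k mA).
pose s := Num.sqrt (1 + k^+2).
have s0 : 0 <= s := sqrtr_ge0 _.
have s2 : s ^+ 2 = 1 + k^+2 by rewrite sqr_sqrtr // addr_ge0 // sqr_ge0.
apply: (le_trans (@area_bound2 R _ `|a| (p2 - k * p1) (r * s) (@shear_meas R A k mA) _ _ _ _)).
- exact: normr_ge0.
- by apply: mulr_ge0 => //; exact: ltW.
- move=> y x1 x2 /= /memA [h1 n1] /memA [h2 n2].
  apply: (@diam_geom R (1 + k^+2) (-2 * p1 - 2 * k * (p2 - y)) (p1^+2 + (p2 - y)^+2) a x1 x2 (r^+2)).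
  + by rewrite addr_ge0 // sqr_ge0.
  + by apply: le_trans h1; apply: eqle => /=; ring.
  + by move=> hh; apply: n1 => /=; apply: le_trans hh; apply: eqle; ring.
  + by apply: le_trans h2; apply: eqle => /=; ring.
  + by move=> hh; apply: n2 => /=; apply: le_trans hh; apply: eqle; ring.
- move=> x y hy /= /memA [h1 _].
  move: h1 => /=.
  set u := p1 + a - x; set v := p2 + k * a - (y + k * x).
  have e : (y - (p2 - k * p1)) ^+ 2 + (u + k * v) ^+ 2 = (1 + k^+2) * (u^+2 + v^+2).
    by rewrite /u /v; ring.
  move=> h1.
  have : (1 + k^+2) * (u^+2 + v^+2) <= (1 + k^+2) * r^+2.
    by apply: ler_wpM2l => //; rewrite addr_ge0 // sqr_ge0.
  have : (r * s) ^+ 2 = (1 + k^+2) * r^+2 by rewrite exprMn s2 mulrC.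
  have := sqr_ge0 (u + k * v).
  move: hy; lra.
rewrite lee_fin.
have -> : d = `|a| * s.
  rewrite /d /euclid_dist /=.
  rewrite -[RHS]ger0_norm ?mulr_ge0 // -sqrtr_sqr exprMn real_normK ?num_real // s2.
  congr Num.sqrt; ring.
have := normr_ge0 a; nra.
Qed.
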